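(* Consider the approximate power-flow model $\mathbf{q}=\operatorname{diag}(\mathbf{v})\mathbf{B}\mathbf{v}$, partitioned into generator (G) and load (L) buses as $$\begin{bmatrix}\mathbf{q}_G\\ \mathbf{q}_L\end{bmatrix}=\begin{bmatrix}\operatorname{diag}(\mathbf{v}_G)&\mathbf{0}\\ \mathbf{0}&\operatorname{diag}(\mathbf{v}_L)\end{bmatrix}\begin{bmatrix}\mathbf{B}_{GG}&\mathbf{B}_{LG}^\top\\ \mathbf{B}_{LG}&\mathbf{B}_{LL}\end{bmatrix}\begin{bmatrix}\mathbf{v}_G\\ \mathbf{v}_L\end{bmatrix}.$$ For control input $\mathbf{u}=[\mathbf{q}_L^\top~~\mathbf{v}_G^\top]^\top$ and output $\mathbf{y}=\mathbf{v}_L$, the mapping $\mathbf{y}=\mathrm{F}(\mathbf{u})$ implicitly defined by this model satisfies $\nabla_{\mathbf{u}}\mathrm{F}(\mathbf{u})\geq\mathbf{0}$ (entrywise) if $\operatorname{diag}(\mathbf{g}_L)+\mathbf{B}_{LL}\succ 0$, where $\mathbf{g}_L:=[\operatorname{diag}(\mathbf{v}_L)]^{-2}\mathbf{q}_L$.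
   Context: An electric power network is modeled by a graph $\mathcal{G}=(\mathcal{N},\mathcal{E})$ with edges being transmission lines; buses are partitioned into generator (PV) buses $\mathcal{N}_G$ and load (PQ) buses $\mathcal{N}_L$. $v_n$ and $q_n$ denote voltage magnitude and reactive power injection at bus $n$; vectors $\mathbf{v},\mathbf{q}$ stack them, with subscripts $G$, $L$ denoting the generator and load sub-vectors. $\mathbf{B}\in\mathbb{R}^{N\times N}$ is a weighted Laplacian of $\mathcal{G}$: $B_{mn}<0$ equals the negative susceptance of line $(m,n)\in\mathcal{E}$, $B_{mn}=0$ if $(m,n)\notin\mathcal{E}$, and $B_{mm}=-\sum_{n\neq m}B_{mn}>0$; it is partitioned into blocks $\mathbf{B}_{GG},\mathbf{B}_{LG},\mathbf{B}_{LL}$ accordingly. Voltages are positive, $\mathbf{v}_L>\mathbf{0}$. The symbol $\succ 0$ for a matrix means all its eigenvalues are real and positive. Inequalities between vectors/matrices are entrywise. *)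

(* Defs.v *)
From HB Require Import structures.
From mathcomp Require Import all_boot all_order all_algebra.
From mathcomp Require Import all_classical all_reals all_analysis.
From mathcomp Require Import complex.
Set Implicit Arguments. Unset Strict Implicit. Unset Printing Implicit Defensive.
Import Order.TTheory GRing.Theory Num.Theory.
Import numFieldNormedType.Exports.
Local Open Scope ring_scope.

Definition weighted_laplacian (R : numDomainType) (N : nat) (B : 'M[R]_N) : Prop :=
  B^T = B /\
  (forall m n : 'I_N, m != n -> B m n <= 0) /\
  (forall m : 'I_N, B m m = - \sum_(n < N | n != m) B m n).

Definition power_flow (R : numDomainType) (N : nat) (B : 'M[R]_N)
  (v q : 'cV[R]_N) : Prop :=
  q = diag_mx v^T *m B *m v.

(* A real square matrix is "≻ 0": all its (complex) eigenvalues are real and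
   positive. In the numeric closed field R[i], 0 < z means z is real and positive. *)
Definition pos_eig (R : rcfType) (n : nat) (M : 'M[R]_n) : Prop :=
  forall z : R[i], eigenvalue (map_mx (fun x : R => (x%:C)%C) M) z -> 0 < z.

(* Main.v *)
Require Import Defs.
From HB Require Import structures.
From mathcomp Require Import all_boot all_order all_algebra.
From mathcomp Require Import all_classical all_reals all_analysis.
From mathcomp Require Import complex.
From mathcomp Require Import ring lra.
Import Order.TTheory GRing.Theory Num.Theory.
Import numFieldNormedType.Exports.
Local Open Scope ring_scope.

Section PD.
Local Open Scope sesquilinear_scope.
Variable R : rcfType.

Lemma toC_real (x : R) : (x%:C)%C \is Num.real.
Proof. by apply/complex_realP; exists x. Qed.

Lemma map_toC_tC m n (A : 'M[R]_(m,n)) :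
  (map_mx (fun x : R => (x%:C)%C) A)^t* = map_mx (fun x : R => (x%:C)%C) A^T.
Proof. by apply/matrixP => i j; rewrite !mxE conj_Creal // toC_real. Qed.

Lemma pd_of_eig n (M : 'M[R]_n) : M^T = M ->
  (forall z : R[i], eigenvalue (map_mx (fun x : R => (x%:C)%C) M) z -> 0 < z) ->
  forall x : 'rV[R]_n, x != 0 -> 0 < (x *m M *m x^T) 0 0.
Proof.
move=> MT Mpos x x0.
set Mc := map_mx (fun x : R => (x%:C)%C) M.
have McT : Mc^t* = Mc by rewrite /Mc map_toC_tC MT.
have Mn : Mc \is normalmx by apply/normalmxP; rewrite McT.
have /orthomx_spectralP Meq := Mn.
set P := spectralmx Mc in Meq; set d := spectral_diag Mc in Meq.
have Pu : P \is unitarymx := spectral_unitarymx Mc.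
have PPt : P *m P^t* = 1%:M := unitarymxP Pu.
have PtP : P^t* *m P = 1%:M by rewrite -invmx_unitary // mulVmx // unitarymx_unit.
have dpos : forall k, 0 < d 0 k.
  move=> k; apply: Mpos; apply/eigenvalueP; exists (row k P).
    rewrite -row_mul [X in row k (P *m X)](_ : _ = Mc) // Meq !mulmxA invmx_unitary // PPt mul1mx row_mul row_diag_mx.
    by rewrite -scalemxAl -rowE.
  apply/negP => /eqP r0.
  have := congr1 (row k) PPt; rewrite row_mul r0 mul0mx row1 => /matrixP/(_ 0 k).
  by rewrite !mxE => /esym; apply/eqP; rewrite !eqxx /= pnatr_eq0.
set xc := map_mx (fun x : R => (x%:C)%C) x.
have key : (((x *m M *m x^T) 0 0)%:C)%C = (xc *m Mc *m xc^t*) 0 0.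
  rewrite /xc /Mc map_toC_tC.
  change (fun x0 : R => (x0%:C)%C) with (real_complex R).
  by rewrite -!map_mxM [RHS]mxE.
rewrite -ltcR key Meq invmx_unitary //.
set y := xc *m P^t*.
have yz : P *m xc^t* = y^t*.
  apply/matrixP => a b; rewrite (ord1 b) !mxE rmorph_sum /=.
  apply: eq_bigr => c _; rewrite !mxE rmorphM /= conjCK mulrC //.
have -> : xc *m (P^t* *m diag_mx d *m P) *m xc^t* = y *m diag_mx d *m y^t*.
  by rewrite -yz /y !mulmxA.
have y0 : y != 0.
  apply: contra x0 => /eqP y0.
  have : xc = y *m P by rewrite /y -mulmxA PtP mulmx1.
  rewrite y0 mul0mx => /matrixP xc0; apply/eqP/matrixP=> a b.
  by have := xc0 a b; rewrite !mxE => /complexI.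
have [k yk] : exists k, y 0 k != 0.
  case: (pickP (fun k => y 0 k != 0)) => [k yk | H]; first by exists k.
  have y00 : y = 0.
    apply/matrixP => a b; rewrite (ord1 a) [RHS]mxE; apply/eqP.
    by move: (H b) => /negbFE.
  by rewrite y00 eqxx in y0.
rewrite mul_mx_diag mxE (bigD1 k) //=.
have term : forall l, 0 <= (\matrix_(i, j) (y i j * d 0 j)) 0 l * y^t* l 0.
  move=> l; rewrite !mxE mulrAC; apply: mulr_ge0; last exact: ltW.
  exact: mul_conjC_ge0.
apply: ltr_wpDr; first by apply: sumr_ge0 => l _; exact: term.
have -> : (\matrix_(i, j) (y i j * d 0 j)) 0 k * y^t* k 0 = d 0 k * (y 0 k * (y 0 k)^*).
  by rewrite !mxE mulrAC mulrC.
by apply: mulr_gt0 => //; rewrite mul_conjC_gt0.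
Qed.

End PD.

Lemma zsign (R : realDomainType) n (M : 'M[R]_n) (w : 'cV[R]_n) :
  (forall a b, a != b -> M a b <= 0) ->
  (forall x : 'rV[R]_n, x != 0 -> 0 < (x *m M *m x^T) 0 0) ->
  (forall a, 0 <= (M *m w) a 0) -> forall a, 0 <= w a 0.
Proof.
move=> Moff Mpd Mw.
pose wm := \row_a (if w a 0 < 0 then - w a 0 else 0).
pose wp := \row_a (if w a 0 < 0 then 0 else w a 0).
have wpm : forall a, w a 0 = wp 0 a - wm 0 a.
  by move=> a; rewrite !mxE; case: ifP => _; rewrite ?sub0r ?opprK ?subr0.
have wm0 : forall a, 0 <= wm 0 a.
  by move=> a; rewrite mxE; case: ifP => // /ltW; rewrite oppr_ge0.
have wp0 : forall a, 0 <= wp 0 a.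
  by move=> a; rewrite mxE; case: ifP => // /negbT; rewrite -leNgt.
have wpmd : forall a, wm 0 a * wp 0 a = 0.
  by move=> a; rewrite !mxE; case: ifP => _; rewrite ?mulr0 ?mul0r.
clearbody wm wp.
have Q : forall x : 'rV[R]_n, (x *m M *m x^T) 0 0 = \sum_a \sum_b x 0 a * M a b * x 0 b.
  move=> x; rewrite mxE exchange_big /=; apply: eq_bigr => b _.
  by rewrite !mxE mulr_suml; apply: eq_bigr.
have le0 : (wm *m M *m wm^T) 0 0 <= 0.
  rewrite Q.
  have : 0 <= \sum_a wm 0 a * (M *m w) a 0 by apply: sumr_ge0 => a _; exact: mulr_ge0.
  have -> : \sum_a wm 0 a * (M *m w) a 0 = \sum_a \sum_b wm 0 a * M a b * w b 0.
    by apply: eq_bigr => a _; rewrite mxE mulr_sumr; apply: eq_bigr => b _; rewrite mulrA.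
  move=> H; rewrite -oppr_ge0; apply: (le_trans H).
  rewrite -sumrN; apply: ler_sum => a _; rewrite -sumrN; apply: ler_sum => b _.
  rewrite wpm mulrBr lerBlDr addrC subrr.
  have [<-|ab] := eqVneq a b.
    by rewrite mulrAC wpmd mul0r.
  rewrite mulrAC; apply: mulr_ge0_le0; last exact: Moff.
  exact: mulr_ge0.
have wmz : wm = 0.
  apply/eqP; apply: contraT => nz.
  by have := Mpd _ nz; rewrite ltNge le0.
move=> a; rewrite wpm wmz mxE subr0; exact: wp0.
Qed.

Section AN.
Variables (R : realType) (V : normedModType R).

Lemma isd_sum n (h : 'I_n -> V -> R) (dh : 'I_n -> R) (x v : V) :
  (forall k, is_derive x v (h k) (dh k)) ->
  is_derive x v (fun u => \sum_(k < n) h k u) (\sum_(k < n) dh k).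
Proof. by move=> H; have := is_derive_sum H; rewrite fct_sumE. Qed.

Lemma isd_mul (f g : V -> R) df dg (x v : V) :
  is_derive x v f df -> is_derive x v g dg ->
  is_derive x v (fun u => f u * g u) (f x * dg + g x * df).
Proof. by move=> H1 H2; have := is_deriveM H1 H2. Qed.

Lemma isd_add (f g : V -> R) df dg (x v : V) :
  is_derive x v f df -> is_derive x v g dg ->
  is_derive x v (fun u => f u + g u) (df + dg).
Proof. by move=> H1 H2; have := is_deriveD H1 H2. Qed.

Lemma isd_scal (f : V -> R) (k : R) df (x v : V) :
  is_derive x v f df -> is_derive x v (fun u => k * f u) (k * df).
Proof. by move=> H1; have := is_deriveZ k H1. Qed.

Lemma isd_entry m n (G : V -> 'M[R]_(m, n)) (x v : V) i j :
  derivable G x v -> is_derive x v (fun u => G u i j) (('D_v G x) i j).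
Proof.
move=> dG; apply: DeriveDef; first by move/derivable_mxP: dG.
by rewrite derive_mx // mxE.
Qed.

End AN.

Lemma arith (R : realFieldType) (Fa S T K wa el : R) : 0 < Fa -> 0 <= el -> K <= 0 ->
  el = Fa * (K + T) + S * wa -> 0 <= (Fa * S) / Fa ^+ 2 * wa + T.
Proof.
move=> Fp el0 K0 E.
have -> : (Fa * S) / Fa ^+ 2 * wa + T = (el - Fa * K) / Fa.
  rewrite E; field; exact: lt0r_neq0.
apply: divr_ge0; last exact: ltW.
rewrite subr_ge0; apply: (le_trans _ el0).
by rewrite pmulr_rle0.
Qed.


Theorem proposition1 (R : realType) (nG nL : nat) (B : 'M[R]_(nG + nL))
  (F : 'cV[R]_(nL + nG) -> 'cV[R]_nL) (u0 : 'cV[R]_(nL + nG)) :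
  weighted_laplacian B ->
  (\forall u \near u0, exists qG : 'cV[R]_nG,
      power_flow B (col_mx (dsubmx u) (F u)) (col_mx qG (usubmx u))) ->
  (forall i : 'I_nL, 0 < F u0 i 0) ->
  differentiable F u0 ->
  let vL := F u0 in
  let qL := usubmx u0 in
  let gL : 'cV[R]_nL := \col_i (qL i 0 / (vL i 0) ^+ 2) in
  pos_eig (diag_mx gL^T + drsubmx B) ->
  forall (i : 'I_nL) (j : 'I_(nL + nG)), 0 <= ('d F u0 (delta_mx j 0)) i 0.
Proof.
move=> [BT [Boff _]] Hnear Fpos Fdiff vL qL gL Mpos i j.
set e : 'cV[R]_(nL + nG) := delta_mx j 0.
set w := 'd F u0 e.
have Heq : forall a : 'I_nL, \forall u \near u0,
   (u : 'cV[R]_(nL + nG)) (lshift nG a) 0 = F u a 0 * (\sum_(k < nG) B (rshift nG a) (lshift nL k) * u (rshift nL k) 0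
        + \sum_(l < nL) B (rshift nG a) (rshift nG l) * F u l 0).
  move=> a; apply: filterS Hnear => u [qG]; rewrite /power_flow => /matrixP /(_ (rshift nG a) 0).
  rewrite col_mxEd mxE mul_diag_mx mxE big_split_ord /= => ->.
  rewrite mulrDr !mulr_sumr; congr (_ + _); apply: eq_bigr => c _;
    by rewrite ?col_mxEu ?col_mxEd mxE [_^T _ _]mxE col_mxEd ?mxE mulrA.
have DF : 'D_e F u0 = w by rewrite deriveE.
have hF : forall l, is_derive u0 e (fun u => F u l 0) (w l 0).
  by move=> l; rewrite -DF; apply: isd_entry; exact: diff_derivable.
have hU : forall c, is_derive u0 e (fun u : 'cV[R]_(nL + nG) => u c 0) (e c 0).
  move=> c; have := @isd_entry R _ _ _ id u0 e c 0 (@derivable_id R _ u0 e).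
  by rewrite derive_id.
have key : forall a : 'I_nL, e (lshift nG a) 0 =
   F u0 a 0 * (\sum_(k < nG) B (rshift nG a) (lshift nL k) * e (rshift nL k) 0
        + \sum_(l < nL) B (rshift nG a) (rshift nG l) * w l 0)
   + (\sum_(k < nG) B (rshift nG a) (lshift nL k) * u0 (rshift nL k) 0
        + \sum_(l < nL) B (rshift nG a) (rshift nG l) * F u0 l 0) * w a 0.
  move=> a.
  have Dg : is_derive u0 e (fun u => F u a 0 * (\sum_(k < nG) B (rshift nG a) (lshift nL k) * u (rshift nL k) 0
        + \sum_(l < nL) B (rshift nG a) (rshift nG l) * F u l 0))
     (F u0 a 0 * (\sum_(k < nG) B (rshift nG a) (lshift nL k) * e (rshift nL k) 0
        + \sum_(l < nL) B (rshift nG a) (rshift nG l) * w l 0)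
   + (\sum_(k < nG) B (rshift nG a) (lshift nL k) * u0 (rshift nL k) 0
        + \sum_(l < nL) B (rshift nG a) (rshift nG l) * F u0 l 0) * w a 0).
    apply: isd_mul => //; apply: isd_add; apply: isd_sum => k; apply: isd_scal => //.
  have E := @near_eq_derive R _ _ (fun u : 'cV[R]_(nL + nG) => u (lshift nG a) 0)
     (fun u => F u a 0 * (\sum_(k < nG) B (rshift nG a) (lshift nL k) * u (rshift nL k) 0
        + \sum_(l < nL) B (rshift nG a) (rshift nG l) * F u l 0)) u0 e (Heq a).
  by rewrite (@derive_val _ _ _ _ _ _ _ (hU _)) (@derive_val _ _ _ _ _ _ _ Dg) in E.
apply: (@zsign R nL (diag_mx gL^T + drsubmx B) w).
- move=> a b ab; rewrite !mxE (negbTE ab) mulr0n add0r; apply: Boff.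
  by rewrite eq_rshift.
- apply: pd_of_eig; last exact: Mpos.
  rewrite linearD /= trmx_drsub BT; congr (_ + _); apply/matrixP => a b.
  by rewrite !mxE eq_sym; case: eqVneq => [->|]; rewrite ?mulr0n.
move=> a; rewrite mulmxDl mxE mul_diag_mx !mxE.
rewrite (nbhs_singleton (Heq a)).
rewrite [\sum_j0 drsubmx B a j0 * w j0 0](eq_bigr (fun l => B (rshift nG a) (rshift nG l) * w l 0)); last by move=> l _; rewrite /drsubmx !mxE.
apply: arith (key a).
- exact: Fpos.
- by rewrite /e mxE ler0n.
apply: sumr_le0 => k _; apply: mulr_le0_ge0.
  by apply: Boff; rewrite eq_rlshift.
by rewrite /e mxE ler0n.
Qed.
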